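(* The group $\mathbb{Z}^2=\langle a,b\mid aba^{-1}b^{-1}\rangle$ is $5$-chordal with respect to the generating set $\{a,b\}$.
   Context: For a group $G$ with finite generating set $S$, $S^{\pm1}=S\cup S^{-1}\setminus\{e\}$. A relation $s_1\cdots s_n=e$ with $n>2$, $s_i\in S^{\pm1}$, is simple if $s_p\cdots s_q=e$ holds exactly when $(p,q)=(1,n)$. $G$ is $k$-chordal with respect to $S$ if for every simple relation $s_1\cdots s_n=e$ with $n\ge k$ there exist $1\le i<j\le n$ and $s'_1,\dots,s'_r\in S^{\pm1}$ with $s_i\cdots s_j=s'_1\cdots s'_r$ and $r\le\min\{j-i,\,n-j+i-2\}$. *)

(* Defs.v *)
From Stdlib Require Import ZArith List Lia.
Import ListNotations.

Section Chordal.
Context {G : Type} (mul : G -> G -> G) (e : G) (inv : G -> G).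

Definition wprod (w : list G) : G := fold_right mul e w.

(* the subword s_p ... s_q (1-indexed, inclusive) *)
Definition seg (w : list G) (p q : nat) : list G :=
  firstn (S q - p) (skipn (p - 1) w).

Definition Spm (S : list G) (x : G) : Prop :=
  (In x S \/ exists y, In y S /\ x = inv y) /\ x <> e.

Definition simple_relation (S : list G) (w : list G) : Prop :=
  2 < length w /\ Forall (Spm S) w /\
  forall p q, 1 <= p -> p <= q -> q <= length w ->
    (wprod (seg w p q) = e <-> (p = 1 /\ q = length w)).

(* k-chordal; the bound r <= min (j-i) (n-j+i-2) is written without
   truncated subtraction: r <= j - i and r + 2 + j <= n + i. *)
Definition chordal (k : nat) (S : list G) : Prop :=
  forall w, simple_relation S w -> k <= length w ->
    exists i j, 1 <= i /\ i < j /\ j <= length w /\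
      exists w', Forall (Spm S) w' /\ wprod (seg w i j) = wprod w' /\
        length w' <= j - i /\ length w' + 2 + j <= length w + i.
End Chordal.

Definition Z2mul (x y : Z * Z) : Z * Z := (fst x + fst y, snd x + snd y)%Z.
Definition Z2e : Z * Z := (0, 0)%Z.
Definition Z2inv (x : Z * Z) : Z * Z := (- fst x, - snd x)%Z.
Definition gen_a : Z * Z := (1, 0)%Z.
Definition gen_b : Z * Z := (0, 1)%Z.

(* Main.v *)
Require Import Defs.
From Stdlib Require Import ZArith List.
Import ListNotations.
From Stdlib Require Import Lia Classical.

Inductive D := DE | DN | DW | DS.

Definition vec (d : D) : Z * Z :=
  match d with DE => (1, 0)%Z | DN => (0, 1)%Z | DW => (-1, 0)%Z | DS => (0, -1)%Z end.
Definition opp (d : D) : D :=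
  match d with DE => DW | DN => DS | DW => DE | DS => DN end.
Definition deqb (x y : D) : bool :=
  match x, y with DE, DE | DN, DN | DW, DW | DS, DS => true | _, _ => false end.
Fixpoint cnt (d : D) (l : list D) : nat :=
  match l with [] => 0 | x :: r => (if deqb x d then 1 else 0) + cnt d r end.

Lemma deqb_eq x y : deqb x y = true <-> x = y.
Proof. destruct x, y; simpl; split; congruence. Qed.

Lemma opp_opp d : opp (opp d) = d. Proof. destruct d; reflexivity. Qed.
Lemma opp_neq d : opp d <> d. Proof. destruct d; discriminate. Qed.

Lemma cnt_app d l r : cnt d (l ++ r) = cnt d l + cnt d r.
Proof. induction l; simpl; auto. rewrite IHl. lia. Qed.

Lemma cnt_In d l : In d l <-> cnt d l > 0.
Proof.
  induction l as [|x l IH]; simpl. split; [tauto|lia].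
  destruct (deqb x d) eqn:Hx.
  - apply deqb_eq in Hx. split; [lia|auto].
  - assert (x <> d) by (intro H; subst; destruct d; discriminate).
    rewrite <- IH. split; [intros [H1|H1]; [congruence|auto]|auto].
Qed.

Lemma cnt_len l : length l = cnt DE l + cnt DN l + cnt DW l + cnt DS l.
Proof. induction l as [|x l IH]; simpl; auto. destruct x; simpl; lia. Qed.

Lemma wprod_vec ds :
  wprod Z2mul Z2e (map vec ds) =
  (Z.of_nat (cnt DE ds) - Z.of_nat (cnt DW ds), Z.of_nat (cnt DN ds) - Z.of_nat (cnt DS ds))%Z.
Proof.
  induction ds as [|x l IH]; simpl. reflexivity.
  change (fold_right Z2mul Z2e (map vec l)) with (wprod Z2mul Z2e (map vec l)).
  rewrite IH. unfold Z2mul; destruct x; cbn -[Z.add Z.sub Z.of_nat Z.opp]; f_equal; lia.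
Qed.

Lemma wprod_app l r :
  wprod Z2mul Z2e (l ++ r) = Z2mul (wprod Z2mul Z2e l) (wprod Z2mul Z2e r).
Proof.
  induction l as [|x l IH]; simpl.
  - destruct (wprod Z2mul Z2e r); unfold Z2mul; simpl; f_equal.
  - change (fold_right Z2mul Z2e (l ++ r)) with (wprod Z2mul Z2e (l ++ r)).
    change (fold_right Z2mul Z2e l) with (wprod Z2mul Z2e l).
    rewrite IH. unfold Z2mul; simpl; f_equal; lia.
Qed.

Lemma spm_vec x : Spm Z2e Z2inv [gen_a; gen_b] x -> exists d, x = vec d.
Proof.
  intros [[H|[y [Hy ->]]] Hne]; simpl in *.
  - destruct H as [<-|[<-|[]]]; [exists DE|exists DN]; reflexivity.
  - destruct Hy as [<-|[<-|[]]]; [exists DW|exists DS]; reflexivity.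
Qed.

Lemma vec_spm d : Spm Z2e Z2inv [gen_a; gen_b] (vec d).
Proof.
  split.
  - destruct d; simpl.
    + left; left; reflexivity.
    + left; right; left; reflexivity.
    + right; exists gen_a; split; [left; reflexivity|reflexivity].
    + right; exists gen_b; split; [right; left; reflexivity|reflexivity].
  - destruct d; discriminate.
Qed.

Lemma forall_vec w : Forall (Spm Z2e Z2inv [gen_a; gen_b]) w -> exists ds, w = map vec ds.
Proof.
  induction 1 as [|x l Hx _ [ds ->]]. exists []; reflexivity.
  destruct (spm_vec _ Hx) as [d ->]. exists (d :: ds); reflexivity.
Qed.

Lemma skipn_len {A} (l1 r : list A) : skipn (length l1) (l1 ++ r) = r.
Proof. induction l1; simpl; auto. Qed.
Lemma firstn_len {A} (l1 r : list A) : firstn (length l1) (l1 ++ r) = l1.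
Proof. induction l1; simpl; f_equal; auto. Qed.

Lemma last_decomp {A} (l : list A) : 2 <= length l -> exists x r y, l = x :: r ++ [y].
Proof.
  destruct l as [|x l]; simpl; [lia|]. intros Hl.
  destruct (exists_last (l := l)) as [r [y ->]]. destruct l; simpl in Hl; [lia|discriminate].
  exists x, r, y; reflexivity.
Qed.

Section Comb.
Variable m : nat.
Variable ds : list D.
Hypothesis H : forall l1 a l2 b l3, ds = l1 ++ a :: l2 ++ b :: l3 -> length l2 <= m - 2 -> b <> opp a.
Hypothesis Hm : 3 <= m.

Lemma window pre l post : ds = pre ++ l ++ post -> length l <= m ->
  forall a, In a l -> In (opp a) l -> False.
Proof.
  intros Hds Hl a Ha Hoa.
  apply in_split in Ha as [s1 [s2 ->]].
  apply in_app_or in Hoa as [Ho|[Ho|Ho]].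
  - apply in_split in Ho as [t1 [t2 ->]].
    apply (H (pre ++ t1) (opp a) t2 a (s2 ++ post)).
    + rewrite Hds. repeat (rewrite <- app_assoc; simpl). reflexivity.
    + repeat (rewrite length_app in Hl; simpl in Hl). lia.
    + now rewrite opp_opp.
  - exact (opp_neq a (eq_sym Ho)).
  - apply in_split in Ho as [t1 [t2 ->]].
    apply (H (pre ++ s1) a t1 (opp a) (t2 ++ post)); auto.
    + rewrite Hds. repeat (rewrite <- app_assoc; simpl). reflexivity.
    + repeat (rewrite length_app in Hl; simpl in Hl). lia.
Qed.

Lemma comb : length ds = 2 * m -> cnt DE ds = cnt DW ds -> cnt DN ds = cnt DS ds -> False.
Proof.
  intros Hlen HEW HNS.
  assert (Hall : forall d, cnt d ds = cnt (opp d) ds) by (destruct d; simpl; lia).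
  set (h1 := firstn m ds). set (h2 := skipn m ds).
  assert (Hds : ds = h1 ++ h2) by (symmetry; apply firstn_skipn).
  assert (L1 : length h1 = m) by (unfold h1; rewrite length_firstn; lia).
  assert (L2 : length h2 = m) by (unfold h2; rewrite length_skipn; lia).
  destruct (last_decomp h1) as [x0 [mid1 [u E1]]]; [lia|].
  destruct (last_decomp h2) as [z [mid2 [y E2]]]; [lia|].
  assert (Wa : forall a, In a h1 -> In (opp a) h1 -> False)
    by (apply (window [] h1 h2); [exact Hds|lia]).
  assert (Wb : forall a, In a h2 -> In (opp a) h2 -> False)
    by (apply (window h1 h2 []); [rewrite app_nil_r; exact Hds|lia]).
  assert (Lm1 : length mid1 = m - 2)
    by (rewrite E1 in L1; simpl in L1; rewrite length_app in L1; simpl in L1; lia).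
  assert (Lm2 : length mid2 = m - 2)
    by (rewrite E2 in L2; simpl in L2; rewrite length_app in L2; simpl in L2; lia).
  assert (Wc : ~ In (opp z) (mid1 ++ [u])).
  { intro Hin. apply (window [x0] (mid1 ++ [u] ++ [z]) (mid2 ++ [y])) with (a := z).
    - rewrite Hds, E1, E2. simpl. repeat (rewrite <- app_assoc; simpl). reflexivity.
    - rewrite !length_app; simpl; lia.
    - apply in_or_app; right; simpl; auto.
    - rewrite app_assoc. apply in_or_app; left; exact Hin. }
  assert (Wd : ~ In (opp u) (z :: mid2)).
  { intro Hin. apply (window (x0 :: mid1) (u :: z :: mid2) [y]) with (a := u).
    - rewrite Hds, E1, E2. simpl. repeat (rewrite <- app_assoc; simpl). reflexivity.
    - simpl; lia.
    - simpl; auto.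
    - right; exact Hin. }
  assert (F3 : forall d, cnt d h2 = cnt (opp d) h1).
  { intro d. pose proof (Hall d) as Hd. rewrite Hds, !cnt_app in Hd.
    assert (A1 : cnt d h1 = 0 \/ cnt (opp d) h1 = 0).
    { destruct (Nat.eq_dec (cnt d h1) 0); auto. right.
      destruct (Nat.eq_dec (cnt (opp d) h1) 0); auto. exfalso.
      apply (Wa d); apply cnt_In; lia. }
    assert (A2 : cnt d h2 = 0 \/ cnt (opp d) h2 = 0).
    { destruct (Nat.eq_dec (cnt d h2) 0); auto. right.
      destruct (Nat.eq_dec (cnt (opp d) h2) 0); auto. exfalso.
      apply (Wb d); apply cnt_In; lia. }
    lia. }
  assert (Cz : cnt (opp z) h1 = 1).
  { pose proof (F3 z) as Fz.
    assert (cnt z h2 > 0) by (apply cnt_In; rewrite E2; simpl; auto).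
    assert (C0 : cnt (opp z) (mid1 ++ [u]) = 0).
    { destruct (Nat.eq_dec (cnt (opp z) (mid1 ++ [u])) 0); auto.
      exfalso; apply Wc; apply cnt_In; lia. }
    rewrite E1 in Fz |- *. simpl in Fz |- *. rewrite C0 in Fz |- *.
    destruct (deqb x0 (opp z)); lia. }
  assert (Cu : cnt u h1 = 1).
  { pose proof (F3 (opp u)) as Fu. rewrite opp_opp in Fu.
    assert (cnt u h1 > 0) by (apply cnt_In; rewrite E1; simpl; right; apply in_or_app; simpl; auto).
    assert (C0 : cnt (opp u) (z :: mid2) = 0).
    { destruct (Nat.eq_dec (cnt (opp u) (z :: mid2)) 0); auto.
      exfalso; apply Wd; apply cnt_In; lia. }
    rewrite E2 in Fu. change (z :: mid2 ++ [y]) with ((z :: mid2) ++ [y]) in Fu.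
    rewrite cnt_app, C0 in Fu. simpl in Fu. destruct (deqb y (opp u)); lia. }
  assert (Iz : In (opp z) h1) by (apply cnt_In; lia).
  assert (Iu : In u h1) by (apply cnt_In; lia).
  assert (Nz : cnt z h1 = 0).
  { destruct (Nat.eq_dec (cnt z h1) 0); auto. exfalso.
    apply (Wa (opp z)); auto. rewrite opp_opp; apply cnt_In; lia. }
  assert (Nu : cnt (opp u) h1 = 0).
  { destruct (Nat.eq_dec (cnt (opp u) h1) 0); auto. exfalso.
    apply (Wa u); auto. apply cnt_In; lia. }
  assert (U1 : u <> opp z) by (intro Heq; rewrite Heq in Wc; apply Wc; apply in_or_app; simpl; auto).
  pose proof (cnt_len h1) as CL.
  destruct z, u; simpl in *; try congruence; lia.
Qed.
End Comb.

Theorem proposition1 : chordal Z2mul Z2e Z2inv 5 [gen_a; gen_b].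
Proof.
  intros w [Hlen [Hsp Hsimp]] H5.
  destruct (forall_vec _ Hsp) as [ds ->].
  rewrite length_map in *.
  assert (He : wprod Z2mul Z2e (map vec ds) = Z2e).
  { assert (Hs : seg (map vec ds) 1 (length ds) = map vec ds).
    { unfold seg. simpl. rewrite Nat.sub_0_r. apply firstn_all2. rewrite length_map; lia. }
    rewrite <- Hs. apply Hsimp; rewrite ?length_map; auto; lia. }
  rewrite wprod_vec in He. unfold Z2e in He. injection He as HEW HNS.
  assert (Hl := cnt_len ds).
  set (m := cnt DE ds + cnt DN ds).
  assert (Hn : length ds = 2 * m) by (unfold m; lia).
  destruct (classic (exists l1 a l2 b l3, ds = l1 ++ a :: l2 ++ b :: l3 /\
                        length l2 <= m - 2 /\ b = opp a)) as [Hex|Hno].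
  - destruct Hex as [l1 [a [l2 [b [l3 [Hds [Hl2 Hb]]]]]]].
    exists (S (length l1)), (length l1 + length l2 + 2).
    assert (Hlen2 : length ds = length l1 + length l2 + 2 + length l3)
      by (rewrite Hds, length_app; simpl; rewrite length_app; simpl; lia).
    split; [lia|]. split; [lia|]. split; [rewrite ?length_map; lia|].
    exists (map vec l2). split; [|split].
    + apply Forall_forall. intros x Hx. apply in_map_iff in Hx as [d [<- _]]. apply vec_spm.
    + assert (Hs : seg (map vec ds) (S (length l1)) (length l1 + length l2 + 2)
                   = map vec (a :: l2 ++ [b])).
      { unfold seg. replace (S (length l1) - 1) with (length l1) by lia.
        replace (S (length l1 + length l2 + 2) - S (length l1))
          with (length (map vec (a :: l2 ++ [b]))) by (simpl; rewrite length_map, length_app; simpl; lia).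
        rewrite Hds, map_app.
        rewrite <- (length_map vec l1), skipn_len.
        replace (map vec (a :: l2 ++ b :: l3)) with (map vec (a :: l2 ++ [b]) ++ map vec l3)
          by (rewrite <- map_app; simpl; rewrite <- app_assoc; reflexivity).
        apply firstn_len. }
      rewrite Hs. simpl. rewrite map_app.
      change (fold_right Z2mul Z2e (map vec l2 ++ map vec [b]))
        with (wprod Z2mul Z2e (map vec l2 ++ map vec [b])).
      rewrite wprod_app. subst b.
      destruct (wprod Z2mul Z2e (map vec l2)) as [p q].
      destruct a; unfold Z2mul, Z2e; cbn -[Z.add Z.sub Z.opp]; f_equal; lia.
    + rewrite ?length_map. lia.
  - exfalso. apply (comb m ds).
    + intros l1 a l2 b l3 Hds Hl2 Hb. apply Hno. exists l1, a, l2, b, l3. auto.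
    + unfold m in *. lia.
    + exact Hn.
    + lia.
    + lia.
Qed.
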